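(* In the setting below, for all distinct $i,j,k\in\mathbb Z/N\mathbb Z$ we have $\#(P_{ij}\cap Q^+_{jk})\leq2$.
   Context: Setting: $p,q$ distinct primes, $N=p+q$; $M=(m_{ik})_{i,k\in\mathbb Z/N\mathbb Z}$ has entries in $\mathbb Z/pq\mathbb Z$ and $(e^{2\pi i\,m_{ik}/pq})$ is a complex Hadamard matrix (unimodular entries, orthogonal rows). $L_i(k)=m_{ik}$, $L_{ij}=L_j-L_i$. For $d\mid pq$, $d(\mathbb Z/pq\mathbb Z)$ is the subgroup of multiples of $d$. For distinct $i,j$ there is a partition $\mathbb Z/N\mathbb Z=P_{ij}\sqcup Q_{ij}\sqcup R_{ij}$ and $r\in\mathbb Z/pq\mathbb Z$ with: $\#R_{ij}=2$ and $L_{ij}\equiv r$ on $R_{ij}$; $\#P_{ij}=p-1$ and $L_{ij}(P_{ij})=(r+q(\mathbb Z/pq\mathbb Z))\setminus\{r\}$; $\#Q_{ij}=q-1$ and $L_{ij}(Q_{ij})=(r+p(\mathbb Z/pq\mathbb Z))\setminus\{r\}$. This partition is unique ($R_{ij}$ is the pair of indices where $L_{ij}$ takes its unique repeated value). Put $P^+_{ij}=P_{ij}\cup R_{ij}$, $Q^+_{ij}=Q_{ij}\cup R_{ij}$. *)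

(* Defs.v *)
From HB Require Import structures.
From mathcomp Require Import all_boot all_order all_algebra all_field.
Set Implicit Arguments. Unset Strict Implicit. Unset Printing Implicit Defensive.
Import Order.TTheory GRing.Theory Num.Theory.
Local Open Scope ring_scope.

(* The matrix M has rows/columns indexed by Z/NZ (represented as 'I_N; only the
   index set matters) and entries in Z/nZ (n = pq). *)

Definition Lij (n N : nat) (M : 'M['Z_n]_N) (i j : 'I_N) (k : 'I_N) : 'Z_n :=
  M j k - M i k.

Definition mulsub (n d : nat) : {set 'Z_n} :=
  [set (d%:R * y : 'Z_n) | y in [set: 'Z_n]].

Definition coset_of_mul (n d : nat) (r : 'Z_n) : {set 'Z_n} :=
  [set r + y | y in mulsub n d].

(* (e^{2 pi i m_ik / pq}) is a complex Hadamard matrix: unimodular entries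
   (automatic for roots of unity) and pairwise orthogonal rows.
   Here w plays the role of e^{2 pi i / pq}. *)
Definition hadamard_exp (n N : nat) (w : algC) (M : 'M['Z_n]_N) : Prop :=
  forall i j : 'I_N, i != j ->
    \sum_(k < N) w ^+ (M i k : nat) * (w ^+ (M j k : nat))^* = 0.

Definition PQR_partition (p q : nat) (M : 'M['Z_(p * q)]_(p + q))
    (i j : 'I_(p + q)) (P Q R : {set 'I_(p + q)}) (r : 'Z_(p * q)) : Prop :=
  [/\ [/\ [disjoint P & Q], [disjoint P & R], [disjoint Q & R]
        & P :|: Q :|: R = [set: 'I_(p + q)]],
      #|R| = 2%N /\ {in R, forall k, Lij M i j k = r},
      #|P| = p.-1 /\ [set Lij M i j k | k in P] = coset_of_mul q r :\ r
    & #|Q| = q.-1 /\ [set Lij M i j k | k in Q] = coset_of_mul p r :\ r].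

(* Main.v *)
Require Import Defs.
From HB Require Import structures.
From mathcomp Require Import all_boot all_order all_algebra all_field.
From mathcomp Require Import ring zify.
Set Implicit Arguments. Unset Strict Implicit. Unset Printing Implicit Defensive.
Import Order.TTheory GRing.Theory Num.Theory.
Local Open Scope ring_scope.

Section Zpq.
Variables p q : nat.
Hypothesis pr_p : prime p.
Hypothesis pr_q : prime q.
Hypothesis neq_pq : p != q.

Notation Z := 'Z_(p * q).

Lemma n_gt1 : (1 < p * q)%N.
Proof. have := prime_gt1 pr_p; have := prime_gt1 pr_q; nia. Qed.

Lemma cardZ : #|{: Z}| = (p * q)%N.
Proof. by rewrite card_ord Zp_cast // n_gt1. Qed.

Lemma pq0 : (p%:R * q%:R : Z) = 0.
Proof. by rewrite -natrM pchar_Zp // n_gt1. Qed.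

Lemma bez : exists a b : Z, a * p%:R + b * q%:R = 1.
Proof.
have cpq : coprime p q by rewrite prime_coprime // dvdn_prime2.
have [a _ ha] := Bezoutl q (prime_gt0 pr_p).
move: ha; rewrite (eqP cpq) => /dvdnP [b hb].
exists (b%:R), (- (a%:R)).
apply/eqP; rewrite mulNr subr_eq -!natrM -hb natrD.
done.
Qed.

Definition kerp : {set Z} := [set x | p%:R * x == 0].
Definition kerq : {set Z} := [set x | q%:R * x == 0].

Lemma capPQ (x : Z) : x \in kerp -> x \in kerq -> x = 0.
Proof.
rewrite !inE => /eqP h1 /eqP h2; have [a [b hab]] := bez.
by rewrite -[x]mul1r -hab mulrDl -!mulrA h1 h2 !mulr0 addr0.
Qed.

Lemma decomp (m : Z) : exists u v, [/\ u \in kerp, v \in kerq & m = u + v].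
Proof.
have [a [b hab]] := bez.
exists (m * (b * q%:R)), (m * (a * p%:R)); rewrite !inE; split.
- have -> : p%:R * (m * (b * q%:R)) = m * b * (p%:R * q%:R) by ring.
  by rewrite pq0 mulr0.
- have -> : q%:R * (m * (a * p%:R)) = m * a * (p%:R * q%:R) by ring.
  by rewrite pq0 mulr0.
- by rewrite -mulrDr addrC hab mulr1.
Qed.

Lemma kerp_q (x : Z) : x \in kerp -> exists y : Z, x = q%:R * y.
Proof.
rewrite inE => /eqP h; have [a [b hab]] := bez.
exists (b * x); transitivity ((a * p%:R + b * q%:R) * x); first by rewrite hab mul1r.
by rewrite mulrDl -mulrA h mulr0 add0r; ring.
Qed.

Lemma kerq_p (x : Z) : x \in kerq -> exists y : Z, x = p%:R * y.
Proof.
rewrite inE => /eqP h; have [a [b hab]] := bez.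
exists (a * x); transitivity ((a * p%:R + b * q%:R) * x); first by rewrite hab mul1r.
by rewrite mulrDl -(mulrA b) h mulr0 addr0; ring.
Qed.

Lemma kerp_le : (#|kerp| <= p)%N.
Proof.
apply: (@leq_trans #|{: 'I_p}|); last by rewrite card_ord.
apply: (leq_trans _ (leq_imset_card (fun k : 'I_p => (q%:R * (val k)%:R : Z)) _)).
apply: subset_leq_card; apply/subsetP => x /kerp_q [y ->].
have hp := prime_gt0 pr_p.
have -> : y = (val y %/ p * p + val y %% p)%N%:R by rewrite -divn_eq natr_Zp.
apply/imsetP; exists (Ordinal (ltn_pmod (val y) hp)) => //=.
rewrite natrD mulrDr natrM.
have -> : q%:R * ((val y %/ p)%:R * p%:R) = (val y %/ p)%:R * (p%:R * q%:R) :> Z by ring.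
by rewrite pq0 mulr0 add0r.
Qed.

Lemma kerq_le : (#|kerq| <= q)%N.
Proof.
apply: (@leq_trans #|{: 'I_q}|); last by rewrite card_ord.
apply: (leq_trans _ (leq_imset_card (fun k : 'I_q => (p%:R * (val k)%:R : Z)) _)).
apply: subset_leq_card; apply/subsetP => x /kerq_p [y ->].
have hq := prime_gt0 pr_q.
have -> : y = (val y %/ q * q + val y %% q)%N%:R by rewrite -divn_eq natr_Zp.
apply/imsetP; exists (Ordinal (ltn_pmod (val y) hq)) => //=.
rewrite natrD mulrDr natrM.
have -> : p%:R * ((val y %/ q)%:R * q%:R) = (val y %/ q)%:R * (p%:R * q%:R) :> Z by ring.
by rewrite pq0 mulr0 add0r.
Qed.

Lemma kerp0 : (0 : Z) \in kerp. Proof. by rewrite inE mulr0. Qed.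
Lemma kerq0 : (0 : Z) \in kerq. Proof. by rewrite inE mulr0. Qed.
Lemma kerpB (x y : Z) : x \in kerp -> y \in kerp -> x - y \in kerp.
Proof. by rewrite !inE mulrBr => /eqP -> /eqP ->; rewrite subr0. Qed.
Lemma kerqB (x y : Z) : x \in kerq -> y \in kerq -> x - y \in kerq.
Proof. by rewrite !inE mulrBr => /eqP -> /eqP ->; rewrite subr0. Qed.
Lemma kerpD (x y : Z) : x \in kerp -> y \in kerp -> x + y \in kerp.
Proof. by rewrite !inE mulrDr => /eqP -> /eqP ->; rewrite addr0. Qed.
Lemma kerqD (x y : Z) : x \in kerq -> y \in kerq -> x + y \in kerq.
Proof. by rewrite !inE mulrDr => /eqP -> /eqP ->; rewrite addr0. Qed.
Lemma kerpN (x : Z) : x \in kerp -> - x \in kerp.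
Proof. by rewrite !inE mulrN oppr_eq0. Qed.

Lemma addPQ_inj : {in setX kerp kerq &, injective (fun uv : Z * Z => uv.1 + uv.2)}.
Proof.
move=> [u v] [u' v'] /setXP [hu hv] /setXP [hu' hv'] /= e.
have h1 : u - u' \in kerp by apply: kerpB.
have e2 : u - u' = v' - v.
  by rewrite -[u](addrK v) e; ring.
have h2 : u - u' \in kerq by rewrite e2 kerqB.
have := capPQ h1 h2; move/eqP; rewrite subr_eq0 => /eqP eu.
have ev : v' = v by apply/eqP; rewrite -subr_eq0 -e2 eu subrr.
by apply/eqP; rewrite xpair_eqE eu ev !eqxx.
Qed.

Lemma addPQ_onto : [set uv.1 + uv.2 | uv in setX kerp kerq] = [set: Z].
Proof.
apply/setP => m; rewrite inE; have [u [v [hu hv ->]]] := decomp m.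
by apply/imsetP; exists (u, v) => //; rewrite inE hu hv.
Qed.

Lemma grid (F : Z -> nat) :
  (\sum_(m : Z) F m = \sum_(u in kerp) \sum_(v in kerq) F (u + v)%R)%N.
Proof.
rewrite pair_big_dep /=.
rewrite (eq_bigl (fun uv => uv \in setX kerp kerq)); last by move=> x; rewrite !inE.
rewrite -(big_imset (fun m => F m) addPQ_inj) addPQ_onto.
by apply: eq_bigl => m; rewrite inE.
Qed.

Lemma card_prod : (#|kerp| * #|kerq| = p * q)%N.
Proof.
have := grid (fun _ => 1%N); rewrite sum1_card sum_nat_const => <-.
by rewrite sum_nat_const card_ord muln1 Zp_cast // n_gt1.
Qed.

Lemma card_kerp : #|kerp| = p.
Proof.
have := card_prod; have := kerp_le; have := kerq_le.
move: #|kerp| #|kerq| => a b hb ha e.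
have hp := prime_gt1 pr_p; have hq := prime_gt1 pr_q.
apply/eqP; rewrite eqn_leq ha /= leqNgt; apply/negP => lt.
have : (a * b < p * q)%N.
  apply: (@leq_trans (p * b)); first by rewrite ltn_pmul2r //; case: b e {hb}; rewrite ?muln0; nia.
  by rewrite leq_pmul2l //; nia.
by rewrite e ltnn.
Qed.
Lemma card_kerq : #|kerq| = q.
Proof.
have := card_prod; rewrite card_kerp => /eqP; rewrite eqn_pmul2l ?prime_gt0 // => /eqP //.
Qed.

End Zpq.
Lemma galois_sum (n : nat) (z : algC) (hz : n.-primitive_root z) (I : finType)
  (e : I -> nat) : \sum_i z ^+ e i = 0 ->
  forall k, coprime k n -> \sum_i (z ^+ k) ^+ e i = 0.
Proof.
move=> h0 k ck.
pose P : {poly rat} := \sum_i 'X^(e i).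
have hP : map_poly ratr P = \sum_i 'X^(e i) :> {poly algC}.
  by rewrite rmorph_sum; apply: eq_bigr => i _; rewrite /= map_polyXn.
have ev (x : algC) : (map_poly ratr P).[x] = \sum_i x ^+ e i.
  by rewrite hP horner_sum; apply: eq_bigr => i _; rewrite hornerXn.
case: (minCpolyP z) => p0 [hmin _] hroot.
have : p0 %| P by rewrite -hroot /root ev h0.
case/dvdpP => g hg.
rewrite -ev hg rmorphM /= -hmin hornerM.
have : root (minCpoly z) (z ^+ k).
  by rewrite (minCpoly_cyclotomic hz) (root_cyclotomic hz) prim_root_exp_coprime.
by move/eqP ->; rewrite mulr0.
Qed.

Section Exp.
Variables p q : nat.
Hypothesis pr_p : prime p.
Hypothesis pr_q : prime q.
Hypothesis neq_pq : p != q.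
Variable w : algC.
Hypothesis hw : (p * q)%N.-primitive_root w.
Notation Z := 'Z_(p * q).

Definition E (v : Z) : algC := w ^+ v.

Lemma E_nat k : E (k%:R) = w ^+ k.
Proof. by rewrite /E val_Zp_nat ?(n_gt1 pr_p pr_q neq_pq) // (prim_expr_mod hw). Qed.

Lemma E_add (u v : Z) : E (u + v) = E u * E v.
Proof. by rewrite -[u]natr_Zp -[v]natr_Zp -natrD !E_nat exprD. Qed.

Lemma E_mulnat k (v : Z) : E (k%:R * v) = E v ^+ k.
Proof. by rewrite -[v]natr_Zp -natrM !E_nat -exprM mulnC. Qed.

Lemma E0 : E 0 = 1.
Proof. by rewrite /E expr0. Qed.

Lemma E_eq1 (v : Z) : (E v == 1) = (v == 0).
Proof.
apply/idP/idP => [|/eqP ->]; last by rewrite E0.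
rewrite /E -(expr0 w) (eq_prim_root_expr hw) mod0n.
have lt : (v < p * q)%N by apply: leq_trans (ltn_ord v) _; rewrite Zp_cast // (n_gt1 pr_p pr_q neq_pq).
by rewrite modn_small // => /eqP h; apply/eqP/val_inj.
Qed.

Lemma ortho (v : Z) :
  \sum_(t : Z) E (t * v) = if v == 0 then (p * q)%:R else 0.
Proof.
have eK : (Zp_trunc (p * q)).+2 = (p * q)%N by rewrite Zp_cast // (n_gt1 pr_p pr_q neq_pq).
have -> : \sum_(t : Z) E (t * v) = \sum_(t : Z) E v ^+ t.
  by apply: eq_bigr => t _; rewrite -[t in LHS]natr_Zp E_mulnat.
case: eqP => [->|/eqP nv].
  rewrite E0; under eq_bigr do rewrite expr1n.
  by rewrite sumr_const card_ord eK.
have : (E v - 1) * \sum_(i < (Zp_trunc (p * q)).+2) E v ^+ i = 0.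
  rewrite -subrX1 -E_mulnat eK (pchar_Zp (n_gt1 pr_p pr_q neq_pq)) mul0r E0 subrr //.
move/eqP; rewrite mulf_eq0 subr_eq0 E_eq1 (negPf nv) /= => /eqP //.
Qed.
End Exp.

Section Mixed.
Variables p q : nat.
Hypothesis pr_p : prime p.
Hypothesis pr_q : prime q.
Hypothesis neq_pq : p != q.
Variable w : algC.
Hypothesis hw : (p * q)%N.-primitive_root w.
Notation Z := 'Z_(p * q).
Variable I : finType.
Variable D : I -> Z.
Hypothesis hD : \sum_x E w (D x) = 0.

Definition cnt (m : Z) : nat := #|[set x | D x == m]|.

Lemma F_zero t : coprime t (p * q) -> \sum_x E w ((t%:R : Z) * D x) = 0.
Proof.
move=> ct.
have := @galois_sum _ _ hw _ (fun x => nat_of_ord (D x)) hD _ ct.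
move=> h; apply: etrans h; apply: eq_bigr => x _.
by rewrite (E_mulnat pr_p pr_q neq_pq hw) /E exprAC.
Qed.

Lemma cE (a : Z) : (cnt a)%:R * (p * q)%:R = \sum_(t : Z) \sum_x E w (t * (D x - a)).
Proof.
rewrite exchange_big /=.
rewrite (eq_bigr (fun x => ((D x == a) : nat)%:R * (p * q)%:R)); last first.
  by move=> x _; rewrite (ortho pr_p pr_q neq_pq hw) subr_eq0; case: eqP; rewrite ?mul1r ?mul0r.
rewrite -mulr_suml -natr_sum; congr (_%:R * _).
rewrite /cnt -sum1_card big_mkcond /=.
by apply: eq_bigr => x _; rewrite inE; case: eqP.
Qed.

Lemma fourterm (t y m u v : Z) :
  E w (t * (y - m)) - E w (t * (y - (m + u))) - E w (t * (y - (m + v)))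
  + E w (t * (y - (m + u + v)))
  = E w (t * y) * (E w (- (t * m)) * ((1 - E w (- (t * u))) * (1 - E w (- (t * v))))).
Proof.
have -> : t * (y - m) = t * y + - (t * m) by ring.
have -> : t * (y - (m + u)) = t * y + - (t * m) + - (t * u) by ring.
have -> : t * (y - (m + v)) = t * y + - (t * m) + - (t * v) by ring.
have -> : t * (y - (m + u + v)) = t * y + - (t * m) + - (t * u) + - (t * v) by ring.
rewrite !(E_add pr_p pr_q neq_pq hw); ring.
Qed.

Lemma mixed (m u v : Z) : u \in kerp p q -> v \in kerq p q ->
  (cnt m + cnt (m + u + v)%R = cnt (m + u)%R + cnt (m + v)%R)%N.
Proof.
move=> hu hv.
have N0 : (p * q)%:R != 0 :> algC by rewrite pnatr_eq0 muln_eq0 negb_or -!lt0n !prime_gt0.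
suff : ((cnt m)%:R - (cnt (m + u))%:R - (cnt (m + v))%:R + (cnt (m + u + v))%:R) * (p * q)%:R = 0 :> algC.
  move/eqP; rewrite mulf_eq0 (negPf N0) orbF => /eqP h.
  apply/eqP; rewrite -(@eqr_nat algC) !natrD -subr_eq0; apply/eqP.
  by rewrite -h; ring.
rewrite !mulrDl !mulNr !cE -!sumrB -big_split /=.
apply: big1 => t _.
rewrite -!sumrB -big_split /=.
under eq_bigr do rewrite fourterm.
rewrite -mulr_suml.
have ht : t = (nat_of_ord t)%:R by rewrite natr_Zp.
case: (boolP (coprime t (p * q))) => [ct|nct].
  by rewrite [in X in X * _]ht F_zero // mul0r.
have : (p %| t)%N || (q %| t)%N.
  by move: nct; rewrite coprimeMr ![coprime (nat_of_ord t) _]coprime_sym !prime_coprime // negb_and !negbK.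
case/orP => /dvdnP [k hk].
  have -> : t * u = 0.
    by rewrite ht hk natrM -mulrA (eqP (_ : p%:R * u == 0)) ?mulr0 //; move: hu; rewrite inE.
  by rewrite oppr0 (@E0 p q w) subrr !(mul0r, mulr0).
have -> : t * v = 0.
  by rewrite ht hk natrM -mulrA (eqP (_ : q%:R * v == 0)) ?mulr0 //; move: hv; rewrite inE.
by rewrite oppr0 (@E0 p q w) subrr !(mul0r, mulr0).
Qed.
End Mixed.

Lemma sum_eq1 (T : finType) (A : {pred T}) (f : T -> nat) :
  (\sum_(x in A) f x = 1)%N ->
  exists2 x0, x0 \in A & (f x0 = 1 /\ forall x, x \in A -> x != x0 -> f x = 0)%N.
Proof.
move=> h.
case: (pickP (fun x => (x \in A) && (0 < f x)%N)) => [x0 /andP [hx0 pos] | H]; last first.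
  have : (\sum_(x in A) f x == 0)%N.
    rewrite sum_nat_eq0; apply/forallP => x; apply/implyP => xA.
    by have := H x; rewrite xA /= lt0n => /negbFE.
  by rewrite h.
exists x0 => //.
move: h; rewrite (bigD1 x0) //= => h.
have hf : f x0 = 1%N by move: h pos; lia.
split => // x xA nx.
have : (\sum_(i in A | i != x0) f i == 0)%N by apply/eqP; move: h; lia.
by rewrite sum_nat_eq0 => /forallP /(_ x); rewrite xA nx /= => /eqP.
Qed.

Definition good (p q : nat) (I : finType) (L : I -> 'Z_(p * q)) (r : 'Z_(p * q)) :=
  forall m : 'Z_(p * q), #|[set x | L x == m]| = (((m - r)%R \in kerp p q) + ((m - r)%R \in kerq p q))%N.

Section Struct.
Variables p q : nat.
Hypothesis pr_p : prime p.
Hypothesis pr_q : prime q.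
Hypothesis neq_pq : p != q.
Variable w : algC.
Hypothesis hw : (p * q)%N.-primitive_root w.
Notation Z := 'Z_(p * q).
Variable I : finType.
Variable D : I -> Z.
Hypothesis hD : \sum_x E w (D x) = 0.
Hypothesis hI : #|I| = (p + q)%N.

Lemma total : (\sum_(m : Z) cnt D m = p + q)%N.
Proof.
rewrite -hI -sum1_card.
rewrite (eq_bigr (fun m => \sum_x (D x == m : nat))); last first.
  by move=> m _; rewrite /cnt -sum1_card big_mkcond /=; apply: eq_bigr => x _; rewrite inE; case: eqP.
rewrite exchange_big /=; apply: eq_bigr => x _.
rewrite (bigD1 (D x)) //= eqxx big1 ?addn0 // => m /negPf; rewrite eq_sym => -> //.
Qed.

Lemma exists_zero : exists m0, cnt D m0 = 0%N.
Proof.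
case: (pickP (fun m => cnt D m == 0%N)) => [m0 /eqP h | H]; first by exists m0.
have : (#|{: Z}| <= p + q)%N.
  rewrite -total -sum1_card.
  by apply: leq_sum => m _; have := H m; rewrite lt0n => /negbT.
rewrite (cardZ pr_p pr_q neq_pq).
have hp := prime_gt1 pr_p; have hq := prime_gt1 pr_q.
have : (2 < p)%N || (2 < q)%N.
  by move/eqP: neq_pq hp hq; lia.
case/orP => h3; nia.
Qed.

Lemma arith h g : (q * h + p * g = p + q)%N -> h = 1%N /\ g = 1%N.
Proof.
move=> e.
have hp := prime_gt1 pr_p; have hq := prime_gt1 pr_q.
have cpq : coprime p q by rewrite prime_coprime // dvdn_prime2.
case: h e => [|h] e.
  have : (p %| q)%N by apply/dvdnP; exists (g - 1)%N; move: e; nia.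
  by rewrite dvdn_prime2 // (negPf neq_pq).
case: g e => [|g] e.
  have : (q %| p)%N by apply/dvdnP; exists h; move: e; nia.
  by rewrite dvdn_prime2 // eq_sym (negPf neq_pq).
split; nia.
Qed.

Lemma structure : exists r0, good D r0.
Proof.
have [m0 hm0] := exists_zero.
have key u v : u \in kerp p q -> v \in kerq p q ->
    cnt D (m0 + (u + v)) = (cnt D (m0 + u)%R + cnt D (m0 + v)%R)%N.
  move=> hu hv; have := mixed pr_p pr_q neq_pq hw hD m0 hu hv.
  by rewrite hm0 add0n addrA.
pose h := (\sum_(u in kerp p q) cnt D (m0 + u)%R)%N.
pose g := (\sum_(v in kerq p q) cnt D (m0 + v)%R)%N.
have e : (q * h + p * g = p + q)%N.
  rewrite -total (reindex_inj (addrI m0)) /= (grid pr_p pr_q neq_pq).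
  rewrite (eq_bigr (fun u => q * cnt D (m0 + u)%R + g)%N); last first.
    move=> u hu; rewrite (eq_bigr (fun v => cnt D (m0 + u)%R + cnt D (m0 + v)%R)%N); last first.
      by move=> v hv; rewrite key.
    by rewrite big_split /= sum_nat_const (card_kerq pr_p pr_q neq_pq) mulnC.
  by rewrite big_split /= sum_nat_const (card_kerp pr_p pr_q neq_pq) -big_distrr /= mulnC.
have [h1 g1] := arith e.
have [u1 hu1 [cu1 cu0]] := sum_eq1 h1.
have [v1 hv1 [cv1 cv0]] := sum_eq1 g1.
exists (m0 + u1 + v1) => m.
have [u [v [hu hv em]]] := decomp pr_p pr_q neq_pq (m - m0).
have -> : m = m0 + (u + v) by rewrite -em addrC subrK.
rewrite -/(cnt D _) key //.
have -> : m0 + (u + v) - (m0 + u1 + v1) = (u - u1) + (v - v1) by ring.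
have hB : ((u - u1) + (v - v1) \in kerq p q) = (u == u1).
  apply/idP/idP => [hx|/eqP ->]; last by rewrite subrr add0r kerqB.
  have : u - u1 \in kerq p q by rewrite -(addrK (v - v1) (u - u1)) kerqB // kerqB.
  by move/(capPQ pr_p pr_q neq_pq (kerpB hu hu1))/eqP; rewrite subr_eq0.
have hA : ((u - u1) + (v - v1) \in kerp p q) = (v == v1).
  apply/idP/idP => [hx|/eqP ->]; last by rewrite subrr addr0 kerpB.
  have : v - v1 \in kerp p q by rewrite -(addKr (u - u1) (v - v1)) kerpD // kerpN // kerpB.
  by move=> hh; move/eqP: (capPQ pr_p pr_q neq_pq hh (kerqB hv hv1)); rewrite subr_eq0.
rewrite hA hB addnC.
congr (_ + _)%N.
  by case: (eqVneq v v1) => [->|ne] /=; [rewrite cv1 | apply: cv0].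
by case: (eqVneq u u1) => [->|ne] /=; [rewrite cu1 | apply: cu0].
Qed.
End Struct.

Section PQR.
Variables p q : nat.
Hypothesis pr_p : prime p.
Hypothesis pr_q : prime q.
Hypothesis neq_pq : p != q.
Notation Z := 'Z_(p * q).

Lemma mulq_kerp (y : Z) : q%:R * y \in kerp p q.
Proof.
rewrite inE mulrA (pq0 pr_p pr_q neq_pq) mul0r //.
Qed.

Lemma mulp_kerq (y : Z) : p%:R * y \in kerq p q.
Proof.
rewrite inE mulrCA mulrA (pq0 pr_p pr_q neq_pq) mul0r //.
Qed.

Lemma mulsub_q : mulsub (p * q) q = kerp p q.
Proof.
apply/setP => x; apply/imsetP/idP => [[y _ ->]|/(kerp_q pr_p pr_q neq_pq) [y ->]].
  exact: mulq_kerp.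
by exists y; rewrite ?inE.
Qed.

Lemma mulsub_p : mulsub (p * q) p = kerq p q.
Proof.
apply/setP => x; apply/imsetP/idP => [[y _ ->]|/(kerq_p pr_p pr_q neq_pq) [y ->]].
  exact: mulp_kerq.
by exists y; rewrite ?inE.
Qed.

Lemma addrKl (r y : Z) : r + y - r = y.
Proof. by rewrite addrC addKr. Qed.
Lemma addrKl2 (r y : Z) : y = r + (y - r).
Proof. by rewrite addrC subrK. Qed.

Lemma in_shift (S : {set Z}) (r x : Z) : (x \in [set r + y | y in S]) = (x - r \in S).
Proof.
apply/imsetP/idP => [[y hy ->]|h]; first by rewrite (_ : r + y - r = y) //; apply: addrKl.
by exists (x - r) => //; apply: addrKl2.
Qed.

Lemma card_shift (S : {set Z}) (r : Z) : #|[set r + y | y in S]| = #|S|.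
Proof. by rewrite card_imset //; apply: addrI. Qed.

Lemma coset_q (r x : Z) : (x \in coset_of_mul q r) = (x - r \in kerp p q).
Proof. by rewrite /coset_of_mul in_shift mulsub_q. Qed.
Lemma coset_p (r x : Z) : (x \in coset_of_mul p r) = (x - r \in kerq p q).
Proof. by rewrite /coset_of_mul in_shift mulsub_p. Qed.

Lemma card_coset_q (r : Z) : #|coset_of_mul q r :\ r| = p.-1.
Proof.
have := cardsD1 r (coset_of_mul q r).
rewrite coset_q subrr (kerp0 p q) /coset_of_mul card_shift mulsub_q (card_kerp pr_p pr_q neq_pq).
by move=> e; rewrite [in RHS]e.
Qed.
Lemma card_coset_p (r : Z) : #|coset_of_mul p r :\ r| = q.-1.
Proof.
have := cardsD1 r (coset_of_mul p r).
rewrite coset_p subrr (kerq0 p q) /coset_of_mul card_shift mulsub_p (card_kerq pr_p pr_q neq_pq).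
by move=> e; rewrite [in RHS]e.
Qed.

Variable M : 'M[Z]_(p + q).
Variables i j : 'I_(p + q).
Variables P Q R : {set 'I_(p + q)}.
Variable r : Z.
Hypothesis H : PQR_partition M i j P Q R r.

Let L := Lij M i j.

Lemma inP x : x \in P -> (L x - r \in kerp p q) && (L x != r).
Proof.
case: H => _ _ [_ img] _ xP.
have : L x \in coset_of_mul q r :\ r by rewrite -img; apply: imset_f.
by rewrite in_setD1 coset_q andbC.
Qed.

Lemma inQ x : x \in Q -> (L x - r \in kerq p q) && (L x != r).
Proof.
case: H => _ _ _ [_ img] xQ.
have : L x \in coset_of_mul p r :\ r by rewrite -img; apply: imset_f.
by rewrite in_setD1 coset_p andbC.
Qed.

Lemma inR x : x \in R -> L x = r.
Proof. by case: H => _ [_ hR] _ _ /hR. Qed.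

Lemma cover x : [|| x \in P, x \in Q | x \in R].
Proof.
case: H => [[_ _ _ cov] _ _ _].
by have : x \in [set: 'I_(p + q)] by []; rewrite -cov !inE orbA.
Qed.

Lemma injP : {in P &, injective L}.
Proof.
case: H => _ _ [cP img] _; apply/imset_injP.
by rewrite img card_coset_q cP.
Qed.

Lemma injQ : {in Q &, injective L}.
Proof.
case: H => _ _ _ [cQ img]; apply/imset_injP.
by rewrite img card_coset_p cQ.
Qed.

Lemma good_PQR : good L r.
Proof.
move=> m.
have capE (y : Z) : y \in kerp p q -> y \in kerq p q -> y = 0 := @capPQ p q pr_p pr_q neq_pq y.
case: (eqVneq m r) => [->|nmr].
  rewrite subrr kerp0 kerq0.
  have -> : [set x | L x == r] = R.
    apply/setP => x; rewrite inE.
    apply/eqP/idP => [e|/inR //].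
    have := cover x; case/or3P => // h.
      by have := inP h; rewrite e eqxx andbF.
    by have := inQ h; rewrite e eqxx andbF.
  by case: H => _ [-> _].
have nz : m - r != 0 by rewrite subr_eq0.
case: (boolP (m - r \in kerp p q)) => ha.
  have hb : (m - r \in kerq p q) = false.
    by apply/negP => hb; move: nz; rewrite (capE _ ha hb) eqxx.
  rewrite hb.
  have : m \in [set L x | x in P].
    by case: H => _ _ [_ ->] _; rewrite !inE nmr coset_q.
  case/imsetP => x0 x0P em; rewrite em.
  suff -> : [set x | L x == L x0] = [set x0] by rewrite cards1.
  apply/setP => x; rewrite !inE; apply/eqP/eqP => [e|-> //].
  have := cover x; case/or3P => h.
  - exact: injP.
  - have := inQ h; case/andP => hq _.
    have hq' : m - r \in kerq p q by rewrite em -e.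
    by move: nz; rewrite (capE _ ha hq') eqxx.
  - by move: nmr; rewrite em -e inR // eqxx.
case: (boolP (m - r \in kerq p q)) => hb.
  have : m \in [set L x | x in Q].
    by case: H => _ _ _ [_ ->]; rewrite !inE nmr coset_p.
  case/imsetP => x0 x0Q em; rewrite em.
  suff -> : [set x | L x == L x0] = [set x0] by rewrite cards1.
  apply/setP => x; rewrite !inE; apply/eqP/eqP => [e|-> //].
  have := cover x; case/or3P => h.
  - have := inP h; case/andP => hp _.
    by move: ha; rewrite em -e hp.
  - exact: injQ.
  - by move: nmr; rewrite em -e inR // eqxx.
rewrite /=.
apply/eqP; rewrite cards_eq0; apply/eqP/setP => x; rewrite !inE.
apply/negP => /eqP e.
have := cover x; case/or3P => h.
- by have := inP h; rewrite e (negPf ha).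
- by have := inQ h; rewrite e (negPf hb).
- by move: nmr; rewrite -e inR // eqxx.
Qed.
End PQR.

Section Sums.
Variables p q : nat.
Hypothesis pr_p : prime p.
Hypothesis pr_q : prime q.
Hypothesis neq_pq : p != q.
Hypothesis odd_p : odd p.
Notation Z := 'Z_(p * q).

Lemma sum_kerp0 : \sum_(u in kerp p q) u = 0 :> Z.
Proof.
set S := \sum_(u in kerp p q) u.
have eN : S = - S.
  rewrite {1}/S (reindex_inj oppr_inj) /= sumrN /S.
  congr (- _); apply: eq_bigl => u; rewrite !inE mulrN oppr_eq0 //.
have e2 : S + S = 0 by rewrite {2}eN subrr.
have ep : p%:R * S = 0.
  by rewrite /S mulr_sumr; apply: big1 => u; rewrite inE => /eqP.
have hh : ((p.+1)./2 * 2)%N = p.+1.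
  by have := odd_double_half p.+1; rewrite /= odd_p /= add0n -muln2.
have : (((p.+1)./2 * 2)%N%:R - p%:R) * S = S.
  by rewrite hh -addn1 natrD addrAC subrr add0r mul1r.
rewrite mulrBl ep subr0 natrM -mulrA (_ : 2%:R * S = S + S) ?e2 ?mulr0 //.
by rewrite mulr2n mulrDl mul1r.
Qed.

Lemma good_sum (I : finType) (L : I -> Z) (r : Z) : good L r ->
  \sum_x q%:R * (L x - r) = 0.
Proof.
move=> G.
pose f (m : Z) := q%:R * (m - r).
have -> : \sum_x q%:R * (L x - r) = \sum_(m : Z) f m *+ #|[set x | L x == m]|.
  transitivity (\sum_x \sum_(m : Z) f m *+ (L x == m)).
    apply: eq_bigr => x _; rewrite (bigD1 (L x)) //= eqxx mulr1n big1 ?addr0 //.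
    by move=> m; rewrite eq_sym => /negPf ->.
  rewrite exchange_big /=; apply: eq_bigr => m _.
  rewrite sumrMnr; congr (_ *+ _).
  by rewrite -sum1_card [in RHS]big_mkcond /=; apply: eq_bigr => x _; rewrite inE; case: eqP.
under eq_bigr do rewrite G mulrnDr.
rewrite big_split /=.
have sh (K : {set Z}) : \sum_(m : Z) f m *+ (m - r \in K) = \sum_(u in K) q%:R * u.
  rewrite (reindex_inj (addrI r)) /= [RHS]big_mkcond /=; apply: eq_bigr => u _.
  by rewrite /f (addrKl r u) mulrb.
rewrite !sh -mulr_sumr sum_kerp0 mulr0 add0r.
by apply: big1 => v; rewrite inE => /eqP.
Qed.
End Sums.

Lemma conj_E (p q : nat) (pr_p : prime p) (pr_q : prime q) (neq_pq : p != q)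
  (w : algC) (hw : (p * q)%N.-primitive_root w) (a b : 'Z_(p * q)) :
  w ^+ a * (w ^+ b)^* = E w (a - b).
Proof.
have nw : `|w| = 1.
  have := prim_expr_order hw; move/(congr1 Num.norm); rewrite normrX normr1 => /eqP.
  by rewrite pexpr_eq1 ?normr_ge0 ?muln_gt0 ?prime_gt0 // => /eqP.
have hb : w ^+ b * (w ^+ b)^* = 1 by rewrite -normCK normrX nw !expr1n.
have e : E w a = E w (a - b) * E w b by rewrite -(E_add pr_p pr_q neq_pq hw) subrK.
by move: e; rewrite /E => ->; rewrite -mulrA hb mulr1.
Qed.

Unset Implicit Arguments.

Theorem lemma6p3 (p q : nat) (pr_p : prime p) (pr_q : prime q) (neq_pq : p != q)
    (w : algC) (hw : (p * q)%N.-primitive_root w)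
    (M : 'M['Z_(p * q)]_(p + q)) (hM : hadamard_exp w M)
    (i j k : 'I_(p + q)) (hij : i != j) (hjk : j != k) (hik : i != k)
    (Pij Qij Rij : {set 'I_(p + q)}) (rij : 'Z_(p * q))
    (Hij : PQR_partition M i j Pij Qij Rij rij)
    (Pjk Qjk Rjk : {set 'I_(p + q)}) (rjk : 'Z_(p * q))
    (Hjk : PQR_partition M j k Pjk Qjk Rjk rjk) :
  (#|Pij :&: (Qjk :|: Rjk)| <= 2)%N.
Proof.
case: (boolP (odd p)) => [odd_p|]; last first.
  move/(prime_oddPn pr_p) => p2.
  apply: leq_trans (subset_leq_card (subsetIl _ _)) _.
  by case: Hij => _ _ [-> _] _; rewrite p2.
have capE := capPQ pr_p pr_q neq_pq.
set L1 := Lij M i j; set L2 := Lij M j k; set D := Lij M i k.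
have G1 : good L1 rij := good_PQR pr_p pr_q neq_pq Hij.
have G2 : good L2 rjk := good_PQR pr_p pr_q neq_pq Hjk.
have hD : \sum_x E w (D x) = 0.
  have := hM k i; rewrite eq_sym hik => /(_ isT) h; apply: etrans h.
  by apply: eq_bigr => x _; rewrite (conj_E pr_p pr_q neq_pq hw).
have [r3 G3] := structure pr_p pr_q neq_pq hw hD (card_ord _).
have eD x : D x = L1 x + L2 x by rewrite /D /L1 /L2 /Lij; ring.
set e := r3 - rij - rjk.
have he : e \in kerq p q.
  have S1 := good_sum odd_p G1; have S2 := good_sum odd_p G2; have S3 := good_sum odd_p G3.
  have : \sum_(x : 'I_(p + q)) q%:R * e = 0.
    have : \sum_x q%:R * (D x - r3) - \sum_x q%:R * (L1 x - rij) - \sum_x q%:R * (L2 x - rjk)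
      = - \sum_(x : 'I_(p + q)) q%:R * e.
      rewrite -!sumrB -sumrN; apply: eq_bigr => x _; rewrite eD /e; ring.
    by rewrite S1 S2 S3 !subr0 => /esym/eqP; rewrite oppr_eq0 => /eqP.
  rewrite sumr_const card_ord mulrnDr => /eqP; rewrite addr_eq0.
  have hp0 : q%:R * e *+ p = 0 by rewrite -mulr_natl mulrA (pq0 pr_p pr_q neq_pq) mul0r.
  rewrite hp0 eq_sym oppr_eq0 -mulr_natl => h.
  rewrite inE; apply/eqP; apply: capE; rewrite inE //.
    by rewrite mulrA (pq0 pr_p pr_q neq_pq) mul0r.
  by move: h; rewrite mulr1 -[X in X == 0]mulr_natl.
apply: (@leq_trans #|[set x | L2 x == rjk + e]|).
  apply: subset_leq_card; apply/subsetP => x; rewrite !inE => /andP [xP xQR].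
  have /andP [a1 na1] := inP pr_p pr_q neq_pq Hij xP.
  have a2 : L2 x - rjk \in kerq p q.
    case/orP: xQR => h; first by case/andP: (inQ pr_p pr_q neq_pq Hjk h).
    by have -> : L2 x = rjk := inR Hjk h; rewrite subrr kerq0.
  have cnt1 : (0 < #|[set z | D z == D x]|)%N by apply/card_gt0P; exists x; rewrite inE.
  rewrite G3 in cnt1.
  have ey : D x - r3 = (L1 x - rij) + (L2 x - rjk) - e by rewrite eD /e; ring.
  have yB : (D x - r3 \in kerq p q) = false.
    apply/negP => yq.
    have : L1 x - rij \in kerq p q.
      have -> : L1 x - rij = (D x - r3) - (L2 x - rjk) + e by rewrite ey; ring.
      by rewrite kerqD // kerqB.
    move/(capE _ a1)/eqP; rewrite subr_eq0.
    by rewrite (negPf na1).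
  have yA : D x - r3 \in kerp p q by move: cnt1; rewrite yB addn0 lt0b.
  have z : L2 x - rjk - e \in kerp p q.
    have -> : L2 x - rjk - e = (D x - r3) - (L1 x - rij) by rewrite ey; ring.
    by rewrite kerpB.
  have := capE _ z (kerqB a2 he); move/eqP; rewrite subr_eq0 subr_eq.
  by rewrite addrC.
rewrite G2.
have -> : rjk + e - rjk = e by ring.
by case: (e \in kerp p q); case: (e \in kerq p q).
Qed.
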